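(* Consider the algebra of Laurent polynomials in nonzero variables $a,b,c,d,e,f,g,h$ with the log-canonical Poisson bracket determined by $\{a,b\}=\tfrac12 ab,\ \{a,c\}=0,\ \{a,d\}=-\tfrac14 ad,\ \{a,e\}=\tfrac14 ae,\ \{a,f\}=\tfrac14 af,\ \{a,g\}=-\tfrac14 ag,\ \{a,h\}=\tfrac14 ah,$ $\{b,c\}=0,\ \{b,d\}=-\tfrac14 bd,\ \{b,e\}=\tfrac14 be,\ \{b,f\}=-\tfrac14 bf,\ \{b,g\}=-\tfrac14 bg,\ \{b,h\}=\tfrac14 bh,$ $\{c,d\}=-\tfrac12 cd,\ \{c,e\}=\tfrac12 ce,\ \{c,f\}=\{c,g\}=\{c,h\}=0,$ $\{d,e\}=0,\ \{d,f\}=\tfrac14 df,\ \{d,g\}=\{d,h\}=0,$ $\{e,f\}=-\tfrac14 ef,\ \{e,g\}=\{e,h\}=0,\ \{f,g\}=\tfrac14 fg,\ \{f,h\}=-\tfrac14 fh,\ \{h,g\}=0$. Then $de$ and $hg$ are Casimir elements and the symplectic leaves are $6$-dimensional.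
   Context: A log-canonical bracket is extended from the generators to all Laurent polynomials by bilinearity, antisymmetry and the Leibniz rule. (These are the $\lambda$-lengths of a complete system of arcs on a Riemann sphere with two holes, each with two bordered cusps — the $PIII^{D_6}$ case.) *)

(* Defs.v *)
From mathcomp Require Import all_boot all_algebra.
From mathcomp Require Import mpoly.
Set Implicit Arguments. Unset Strict Implicit. Unset Printing Implicit Defensive.
Import GRing.Theory Num.Theory.
Local Open Scope ring_scope.

(* Variables a,b,c,d,e,f,g,h are indexed 0,1,2,3,4,5,6,7. *)

(* 4 * w_ij for i < j, where {x_i, x_j} = w_ij x_i x_j. *)
Definition w4up (i j : nat) : int :=
  match i, j with
  | 0, 1 => 2
  | 0, 3 => -1
  | 0, 4 => 1
  | 0, 5 => 1
  | 0, 6 => -1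
  | 0, 7 => 1
  | 1, 3 => -1
  | 1, 4 => 1
  | 1, 5 => -1
  | 1, 6 => -1
  | 1, 7 => 1
  | 2, 3 => -2
  | 2, 4 => 2
  | 3, 5 => 1
  | 4, 5 => -1
  | 5, 6 => 1
  | 5, 7 => -1
  | _, _ => 0
  end.

Definition wcoef (R : numFieldType) (i j : 'I_8) : R :=
  (if (i < j)%N then (w4up i j)%:~R
   else if (j < i)%N then - (w4up j i)%:~R else 0) / 4%:R.

(* A Laurent polynomial  num * x^(-den)  in x_0..x_7. *)
Record laurent (R : numFieldType) := Laurent {
  lnum : {mpoly R[8]};
  lden : 'I_8 -> nat }.

Definition lgen (R : numFieldType) (i : 'I_8) : laurent R :=
  Laurent ('X_i : {mpoly R[8]}) (fun _ => 0%N).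

(* x_i d/dx_i applied to num * x^(-den), divided by x^(-den) *)
Definition leuler (R : numFieldType) (i : 'I_8) (F : laurent R) : {mpoly R[8]} :=
  'X_i * (lnum F)^`M(i) - (lden F i)%:R *: lnum F.

(* The log-canonical bracket extended to Laurent polynomials by bilinearity,
   antisymmetry and Leibniz:
   {F,G} = sum_{i,j} w_ij x_i x_j (dF/dx_i) (dG/dx_j). *)
Definition lbracket (R : numFieldType) (F G : laurent R) : laurent R :=
  Laurent (\sum_(i < 8) \sum_(j < 8) wcoef R i j *: (leuler i F * leuler j G))
          (fun k => (lden F k + lden G k)%N).

Definition lzero (R : numFieldType) (F : laurent R) : Prop := lnum F = 0.

Definition lmul (R : numFieldType) (F G : laurent R) : laurent R :=
  Laurent (lnum F * lnum G) (fun k => (lden F k + lden G k)%N).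

Definition casimir (R : numFieldType) (F : laurent R) : Prop :=
  forall G : laurent R, lzero (lbracket F G).

Definition leval (R : numFieldType) (x : 'I_8 -> R) (F : laurent R) : R :=
  (lnum F).@[x] / \prod_(k < 8) x k ^+ lden F k.

Definition poisson_tensor (R : numFieldType) (x : 'I_8 -> R) : 'M[R]_8 :=
  \matrix_(i < 8, j < 8) leval x (lbracket (lgen R i) (lgen R j)).

(* dimension of the symplectic leaf through x = rank of the Poisson tensor at x *)
Definition leaf_dim (R : numFieldType) (x : 'I_8 -> R) : nat :=
  \rank (poisson_tensor x).

(* Main.v *)
Require Import Defs.
From mathcomp Require Import all_boot all_algebra mpoly ring zify.
Import GRing.Theory Num.Theory.
Local Open Scope ring_scope.

Section H.
Variable R : numFieldType.

Lemma dX (i j : 'I_8) : ('X_i : {mpoly R[8]})^`M(j) = (i==j)%:R.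
Proof.
rewrite mderivX mnm1E; case: eqVneq => [->|_]; last by rewrite scale0r.
rewrite scale1r; have E : (U_(j) - U_(j) = 0)%MM.
  by apply/mnmP => k; rewrite mnmBE mnm0E subnn.
rewrite E.
by rewrite mpolyX0.
Qed.

Lemma leuler_gen (i k : 'I_8) : leuler k (lgen R i) = (i==k)%:R *: 'X_i.
Proof.
rewrite /leuler /= dX scale0r subr0.
by case: eqVneq => [->|_]; rewrite ?mulr1 ?mulr0 ?scale1r ?scale0r.
Qed.

Lemma bracket_gen (i j : 'I_8) :
  lnum (lbracket (lgen R i) (lgen R j)) = wcoef R i j *: ('X_i * 'X_j).
Proof.
rewrite /= (bigD1 i) //= (bigD1 j) //= !leuler_gen !eqxx !scale1r.
rewrite big1 ?addr0; last first.
  move=> l lj; rewrite !leuler_gen eq_sym (negbTE lj) scale0r mulr0 scaler0 //.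
rewrite big1 ?addr0 //.
move=> k ki; apply: big1 => l _.
by rewrite !leuler_gen eq_sym (negbTE ki) scale0r mul0r scaler0.
Qed.

Lemma leval_gen (x : 'I_8 -> R) (i j : 'I_8) :
  leval x (lbracket (lgen R i) (lgen R j)) = wcoef R i j * (x i * x j).
Proof.
rewrite /leval bracket_gen mevalZ mevalM !mevalXU.
rewrite big1 ?divr1 // => k _; by rewrite expr0.
Qed.

Lemma leuler_mul2 (i j k : 'I_8) :
  leuler k (lmul (lgen R i) (lgen R j)) =
  ((i==k)%:R + (j==k)%:R : R) *: ('X_i * 'X_j).
Proof.
rewrite /leuler /= mderivM !dX scale0r subr0 scalerDl.
case: (eqVneq i k) => [->|_]; case: (eqVneq j k) => [->|_] /=;

  rewrite ?scale1r ?scale0r ?mul1r ?mulr1 ?mul0r ?mulr0 ?addr0 ?add0r //.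
all: try (by rewrite mulrDr mulrC).
all: try (by rewrite mulrA). all: try (by rewrite mulrCA).
all: try (by rewrite mulrC). all: by rewrite ?mulr0n mulr0.
Qed.

Lemma sum_delta (i : 'I_8) (f : 'I_8 -> R) :
  \sum_(k < 8) f k * (i==k)%:R = f i.
Proof.
rewrite (bigD1 i) //= eqxx mulr1 big1 ?addr0 // => k ki.
by rewrite eq_sym (negbTE ki) mulr0.
Qed.

Lemma casimir2 (i j : 'I_8) :
  (forall l, wcoef R i l + wcoef R j l = 0) ->
  casimir (lmul (lgen R i) (lgen R j)).
Proof.
move=> H G; rewrite /lzero /=.
under eq_bigr => k _ do under eq_bigr => l _ do
  rewrite leuler_mul2 -scalerAl scalerA.
rewrite exchange_big /=.
apply: big1 => l _.
rewrite -scaler_suml.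
under eq_bigr => k _ do rewrite mulrDr.
by rewrite big_split /= !sum_delta H scale0r.
Qed.


Definition Wm : 'M[R]_8 := \matrix_(i, j) wcoef R i j.

Lemma PT_eq (x : 'I_8 -> R) :
  poisson_tensor x = diag_mx (\row_i x i) *m Wm *m diag_mx (\row_i x i).
Proof.
apply/matrixP => i j.
rewrite mul_mx_diag mul_diag_mx !mxE leval_gen; ring.
Qed.

Lemma rank_PT (x : 'I_8 -> R) : (forall i, x i != 0) ->
  \rank (poisson_tensor x) = \rank Wm.
Proof.
move=> nz; apply/eqP; rewrite eqn_leq; apply/andP; split.
  by rewrite PT_eq (leq_trans (mxrankM_maxl _ _)) // mxrankM_maxr.
have -> : Wm = diag_mx (\row_i (x i)^-1) *m poisson_tensor x *m diag_mx (\row_i (x i)^-1).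
  apply/matrixP => i j.
  rewrite PT_eq !mul_mx_diag !mul_diag_mx !mxE.
  by field; rewrite !nz.
apply: leq_trans (mxrankM_maxl _ _) _; exact: mxrankM_maxr.
Qed.


Definition tab (t : seq (seq R)) (r k : nat) : R := nth 0 (nth [::] t r) k.
Definition Ltab : seq (seq R) :=
  [:: [:: 0; -1; 1; 0; 0; -1; 1; 0];
      [:: 1; 0; -1; 0; 0; 1; 1; 0];
      [:: -1; 1; 0; 2; 0; 0; 0; 0];
      [:: 0; 0; -2; 0; 0; 0; 0; 0];
      [:: 1; -1; 0; 0; 0; 0; -2; 0];
      [:: -1; -1; 0; 0; 0; 2; 0; 0]].
Definition Lc : 'M[R]_(6, 8) := \matrix_(r, k) tab Ltab r k.
Definition selo (c : 'I_6) : 'I_8 := inord (nth 0%N [:: 0; 1; 2; 3; 5; 6]%N c).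
Definition Rc : 'M[R]_(8, 6) := \matrix_(l, c) (l == selo c)%:R.

Lemma val_selo (c : 'I_6) : nat_of_ord (selo c) = nth 0%N [:: 0; 1; 2; 3; 5; 6]%N c.
Proof. by case: c => [[|[|[|[|[|[|//]]]]]] Hc]; rewrite /selo inordK. Qed.

Lemma WRc : Wm *m Rc = \matrix_(k, c) wcoef R k (selo c).
Proof.
apply/matrixP => k c; rewrite !mxE.
under eq_bigr => l _ do rewrite !mxE eq_sym.
by rewrite sum_delta.
Qed.

Lemma LWR : Lc *m (Wm *m Rc) = 1%:M.
Proof.
rewrite WRc; apply/matrixP => r c; rewrite !mxE.
rewrite !big_ord_recl big_ord0.
rewrite !mxE /wcoef !val_selo.
case: r => [[|[|[|[|[|[|//]]]]]] Hr]; case: c => [[|[|[|[|[|[|//]]]]]] Hc];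
  rewrite /= /tab /=.
all: by field.
Qed.


Definition Ktab : seq (seq R) :=
  [:: [:: 0; 0; 0; 1; 1; 0; 0; 0]; [:: 0; 0; 0; 0; 0; 0; 1; 1]].
Definition Kc : 'M[R]_(2, 8) := \matrix_(r, k) tab Ktab r k.
Definition RKtab : seq (seq R) :=
  [:: [:: 0; 0]; [:: 0; 0]; [:: 0; 0]; [:: 1; 0]; [:: 0; 0]; [:: 0; 0]; [:: 0; 1]; [:: 0; 0]].
Definition RK : 'M[R]_(8, 2) := \matrix_(k, c) tab RKtab k c.

Lemma KW : Kc *m Wm = 0.
Proof.
apply/matrixP => r c; rewrite !mxE.
rewrite !big_ord_recl big_ord0 !mxE /wcoef.
case: r => [[|[|//]] Hr]; case: c => [[|[|[|[|[|[|[|[|//]]]]]]]] Hc];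
  rewrite /= /tab /=.
all: by field.
Qed.

Lemma KRK : Kc *m RK = 1%:M.
Proof.
apply/matrixP => r c; rewrite !mxE.
rewrite !big_ord_recl big_ord0 !mxE.
case: r => [[|[|//]] Hr]; case: c => [[|[|//]] Hc];
  rewrite /= /tab /=.
all: by field.
Qed.

Lemma rankW : \rank Wm = 6%N.
Proof.
apply/eqP; rewrite eqn_leq; apply/andP; split.
  have h1 : (2 <= \rank Kc)%N.
    by rewrite -{1}(mxrank1 R 2) -KRK mxrankM_maxl.
  have h2 : (\rank Kc <= \rank (kermx Wm))%N.
    by apply: mxrankS; apply/sub_kermxP; exact: KW.
  rewrite mxrank_ker in h2.
  have h3 := rank_leq_row Wm.
  lia.
rewrite -{1}(mxrank1 R 6) -LWR.
apply: leq_trans (mxrankM_maxr _ _) _; exact: mxrankM_maxl.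
Qed.

End H.

Theorem mainTheorem5 (R : numFieldType) :
  casimir (lmul (lgen R (inord 3)) (lgen R (inord 4))) /\
  casimir (lmul (lgen R (inord 7)) (lgen R (inord 6))) /\
  (forall x : 'I_8 -> R, (forall i, x i != 0) -> leaf_dim x = 6%N).
Proof.
split; [|split].
- apply: casimir2 => l; rewrite /wcoef !inordK //.
  case: l => [[|[|[|[|[|[|[|[|//]]]]]]]] Hl] /=; by field.
- apply: casimir2 => l; rewrite /wcoef !inordK //.
  case: l => [[|[|[|[|[|[|[|[|//]]]]]]]] Hl] /=; by field.
- move=> x nz; rewrite /leaf_dim rank_PT // rankW //.
Qed.
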